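(* Under the Standing Setup and Assumption (G) described in the context, $$\mathcal{E}(PC_{f,\mathcal{T}})=\sum_{\alpha\in\mathbf{F}_2^{k2^{s-1}}}\ \prod_{c=0}^{2^s-1}\mathcal{E}\big(f\oplus\varphi_{\chi(c,\alpha)}\big).$$
   Context: Standing Setup. $f:\mathbf{F}_2^n\to\mathbf{F}_2$ is a Boolean function. $\mathbf{x}_1,\ldots,\mathbf{x}_n$ are binary sequences, $\mathbf{x}_j=(x_j(t))_{t\ge0}$, with $\mathbf{x}_j$ periodic of period $T_j$, i.e. $x_j(t)=x_j(t \bmod T_j)$. Let $s\ge1$ and integers $0=\ell_1<\ell_2<\cdots<\ell_{s+1}=k\le n$; variable $j$ belongs to block $i$ if $\ell_i<j\le\ell_{i+1}$. For $1\le i\le s$, $M_i=q_i\,\mathrm{lcm}(T_{\ell_i+1},\ldots,T_{\ell_{i+1}})$ with $q_i$ a positive integer. For $c=\sum_{i=1}^s c_i2^{i-1}\in\{0,\ldots,2^s-1\}$ with $c_i\in\{0,1\}$, put $\tau_c=\sum_{i=1}^s c_iM_i$, and $\mathcal{T}=\{\tau_c\}$. The parity-check sequence is $PC_{f,\mathcal{T}}(t)=\bigoplus_{c=0}^{2^s-1} f\big(x_1(t+\tau_c),\ldots,x_n(t+\tau_c)\big)$. The bias of a Boolean function $h$ of $m$ variables is $\mathcal{E}(h)=2^{-m}\sum_{x\in\mathbf{F}_2^m}(-1)^{h(x)}$. The bias $\mathcal{E}(PC_{f,\mathcal{T}})$ is the bias of $PC_{f,\mathcal{T}}(t)$ (for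 a fixed $t\ge0$) viewed as a Boolean function of the $T_1+\cdots+T_n$ bits $x_j(0),\ldots,x_j(T_j-1)$, $1\le j\le n$; equivalently $\mathbb{E}[(-1)^{PC_{f,\mathcal{T}}(t)}]$ when these bits are independent and uniform. Assumption (G): (i) for every $j$ with $k<j\le n$, the $2^s$ integers $\tau_c$ are pairwise incongruent modulo $T_j$; (ii) for every $i\in\{1,\ldots,s\}$ and every $j$ in block $i$, the $2^{s-1}$ integers $\sum_{l\ne i}c_lM_l$ ($c_l\in\{0,1\}$) are pairwise incongruent modulo $T_j$. For $\beta\in\mathbf{F}_2^n$, $\varphi_\beta$ is the linear function $x\mapsto\beta\cdot x$. The map $\chi$: write $\alpha\in\mathbf{F}_2^{k2^{s-1}}$ as $\alpha=(\alpha_1,\ldots,\alpha_k)$ with $\alpha_j=(\alpha_{j,0},\ldots,\alpha_{j,2^{s-1}-1})\in\mathbf{F}_2^{2^{s-1}}$. For $0\le c<2^s$ define $\chi(c,\alpha)=(\chi_1(c,\alpha),\ldots,\chi_k(c,\alpha),0,\ldots,0)\in\mathbf{F}_2^n$ (last $n-k$ coordinates zero), where for $j$ in block $i$, $\chi_j(c,\alpha)=\alpha_{j,m}$ with $m$ the integer obtained from the binary expansion of $c$ by deleting the bit $c_i$ (the bit of weight $2^{i-1}$); explicitly, if $c=2^iq+c_i2^{i-1}+r$ with $0\le r<2^{i-1}$, then $m=2^{i-1}q+r$. *)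

(* Defs.v *)
(* F_2 is modelled by bool (addition = xor = addb). *)
From HB Require Import structures.
From mathcomp Require Import all_boot all_order all_algebra.
Unset Printing Implicit Defensive.
Import GRing.Theory Num.Theory.

Definition bias {I : finType} (h : {ffun I -> bool} -> bool) : rat :=
  ((2%:R : rat) ^+ #|I|)^-1 * \sum_(x : {ffun I -> bool}) (-1) ^+ (h x).

Definition linf n (beta x : {ffun 'I_n -> bool}) : bool :=
  \big[addb/false]_(i < n) (beta i && x i).

(* Reading a bool-valued finite function at a natural index (false if out of range). *)
Definition getb {N} (g : {ffun 'I_N -> bool}) (m : nat) : bool :=
  if @insub nat (fun x => x < N) 'I_N m is Some i then g i else false.

(* Bit i (0-based) of c, i.e. c_{i+1} in the paper's 1-based notation. *)
Definition bitn (i c : nat) : bool := odd (c %/ 2 ^ i).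

(* The variable set: bits x_j(0..T_j-1), j < n (0-based). *)
Definition Vars n (T : 'I_n -> nat) := {j : 'I_n & 'I_(T j)}.

Definition xval {n} {T : 'I_n -> nat} (X : {ffun Vars n T -> bool}) (j : 'I_n) (t : nat)
  : bool :=
  if @insub nat (fun x => x < T j) 'I_(T j) (t %% T j) is Some o
  then X (Tagged (fun j => 'I_(T j)) o) else false.

(* M_i (0-based block i: variables j with l i <= j < l (i+1), 0-based j). *)
Definition Mblk n (T : 'I_n -> nat) (l q : nat -> nat) (i : nat) : nat :=
  q i * \big[lcmn/1%N]_(j < n | (l i <= j) && (j < l i.+1)) T j.

Definition tau n (T : 'I_n -> nat) (l q : nat -> nat) (s c : nat) : nat :=
  \sum_(i < s) bitn i c * Mblk n T l q i.

Definition PC n (T : 'I_n -> nat) (l q : nat -> nat) (s : nat)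
  (f : {ffun 'I_n -> bool} -> bool) (t : nat) (X : {ffun Vars n T -> bool}) : bool :=
  \big[addb/false]_(c < 2 ^ s) f [ffun j => xval X j (t + tau n T l q s c)].

Definition blk (l : nat -> nat) (s j : nat) : nat :=
  find (fun i => j < l i.+1) (iota 0 s).

Definition delbit (i c : nat) : nat := (c %/ 2 ^ i.+1) * 2 ^ i + c %% 2 ^ i.

Definition chi n k (l : nat -> nat) (s c : nat)
  (alpha : {ffun 'I_k -> {ffun 'I_(2 ^ s.-1) -> bool}}) : {ffun 'I_n -> bool} :=
  [ffun j : 'I_n =>
     if @insub nat (fun x => x < k) 'I_k (val j) is Some j'
     then getb (alpha j') (delbit (blk l s j) c) else false].

(* Main.v *)
Require Import Defs.
From HB Require Import structures.
From mathcomp Require Import all_boot all_order all_algebra.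
Import GRing.Theory Num.Theory.

Definition ins0 i m := (m %/ 2 ^ i) * 2 ^ i.+1 + m %% 2 ^ i.

Lemma pow2_gt0 i : 0 < 2 ^ i. Proof. by rewrite expn_gt0. Qed.

Lemma divmod_small i H R : R < 2 ^ i -> (H * 2 ^ i + R) %/ 2 ^ i = H /\ (H * 2 ^ i + R) %% 2 ^ i = R.
Proof.
move=> HR; split; first by rewrite divnMDl ?pow2_gt0 // divn_small ?addn0.
by rewrite modnMDl modn_small.
Qed.

Lemma split3 i H (b : bool) R : R < 2 ^ i ->
  [/\ (H * 2 ^ i.+1 + b * 2 ^ i + R) %/ 2 ^ i.+1 = H,
      (H * 2 ^ i.+1 + b * 2 ^ i + R) %% 2 ^ i = R &
      bitn i (H * 2 ^ i.+1 + b * 2 ^ i + R) = b].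
Proof.
move=> HR.
have Ex : H * 2 ^ i.+1 + b * 2 ^ i + R = (H * 2 + b) * 2 ^ i + R.
  by rewrite expnSr mulnDl mulnA [H * 2 ^ i * 2]mulnAC.
rewrite Ex; have [D1 D2] := @divmod_small i (H * 2 + b) R HR.
split => //.
  by rewrite expnSr divnMA D1 divnMDl // divn_small ?addn0 //; by case: (b : bool).
by rewrite /bitn D1 oddD oddM andbF; by case: (b : bool).
Qed.

Lemma decomp i c : c = (c %/ 2 ^ i.+1) * 2 ^ i.+1 + bitn i c * 2 ^ i + c %% 2 ^ i.
Proof.
rewrite {1}(divn_eq c (2 ^ i)) {1}(divn_eq (c %/ 2 ^ i) 2) modn2.
by rewrite expnSr divnMA mulnDl -mulnA (mulnC 2).
Qed.

Lemma delbit_eq i c c' : delbit i c = delbit i c' ->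
  c %/ 2 ^ i.+1 = c' %/ 2 ^ i.+1 /\ c %% 2 ^ i = c' %% 2 ^ i.
Proof.
rewrite /delbit => E.
have [A1 A2] := @divmod_small i (c %/ 2 ^ i.+1) _ (ltn_pmod c (pow2_gt0 i)).
have [B1 B2] := @divmod_small i (c' %/ 2 ^ i.+1) _ (ltn_pmod c' (pow2_gt0 i)).
by split; [rewrite -A1 -B1 E | rewrite -A2 -B2 E].
Qed.

Lemma ins0_split i m (b : bool) :
  ins0 i m + b * 2 ^ i = (m %/ 2 ^ i) * 2 ^ i.+1 + b * 2 ^ i + m %% 2 ^ i.
Proof. by rewrite /ins0 addnAC. Qed.

Lemma delbit_ins i m (b : bool) : delbit i (ins0 i m + b * 2 ^ i) = m.
Proof.
rewrite ins0_split /delbit.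
have [E1 E2 _] := @split3 i (m %/ 2 ^ i) b _ (ltn_pmod m (pow2_gt0 i)).
by rewrite E1 E2 -divn_eq.
Qed.

Lemma bit_ins i m (b : bool) : bitn i (ins0 i m + b * 2 ^ i) = b.
Proof.
rewrite ins0_split.
by have [_ _ ->] := @split3 i (m %/ 2 ^ i) b _ (ltn_pmod m (pow2_gt0 i)).
Qed.

Lemma fiber i c : c = ins0 i (delbit i c) + bitn i c * 2 ^ i.
Proof.
have [E1 E2] := @delbit_eq i _ _ (delbit_ins i (delbit i c) false).
rewrite ins0_split.
have [F1 F2 _] := @split3 i (delbit i c %/ 2 ^ i) false _ (ltn_pmod (delbit i c) (pow2_gt0 i)).
rewrite ins0_split F1 in E1; rewrite ins0_split F2 in E2; rewrite E1 E2.
exact: decomp.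
Qed.

Lemma bit_other i i' c c' : i' != i -> delbit i c = delbit i c' -> bitn i' c = bitn i' c'.
Proof.
move=> ne /delbit_eq [EH EL].
case: (ltngtP i' i) ne => // Hlt _.
- have Ep : 2 ^ i = 2 ^ (i - i') * 2 ^ i' by rewrite -expnD subnK // ltnW.
  have key : forall x, bitn i' x = bitn i' (x %% 2 ^ i).
    move=> x; rewrite /bitn {1}(divn_eq x (2 ^ i)) {2}Ep mulnA divnMDl ?pow2_gt0 //.
    rewrite oddD oddM oddX /=.
    by rewrite (_ : (i - i' == 0) = false) ?andbF // subn_eq0 leqNgt Hlt.
  by rewrite key EL -key.
- have Ep : 2 ^ i' = 2 ^ i.+1 * 2 ^ (i' - i.+1) by rewrite -expnD subnKC.
  by rewrite /bitn Ep !divnMA EH.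
Qed.

Lemma delbit_lt i s c : i < s -> c < 2 ^ s -> delbit i c < 2 ^ s.-1.
Proof.
case: s => [//|s] /= Hi Hc.
have Ep : 2 ^ s.+1 = 2 ^ (s - i) * 2 ^ i.+1 by rewrite -expnD addnS subnK.
have HH : c %/ 2 ^ i.+1 < 2 ^ (s - i) by rewrite ltn_divLR ?pow2_gt0 // -Ep.
apply: (@leq_trans ((c %/ 2 ^ i.+1).+1 * 2 ^ i)).
  by rewrite /delbit mulSn [X in _ < X]addnC ltn_add2l ltn_pmod ?pow2_gt0.
have Hi' : i <= s by []. by rewrite -[in X in _ <= X](subnK Hi') expnD leq_mul.
Qed.

Lemma ins_lt i s m (b : bool) : i < s -> m < 2 ^ s.-1 -> ins0 i m + b * 2 ^ i < 2 ^ s.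
Proof.
case: s => [//|s] /= Hi Hm.
have Ep : 2 ^ s = 2 ^ (s - i) * 2 ^ i by rewrite -expnD subnK.
have HH : m %/ 2 ^ i < 2 ^ (s - i) by rewrite ltn_divLR ?pow2_gt0 // -Ep.
rewrite ins0_split -addnA.
apply: (@leq_trans ((m %/ 2 ^ i).+1 * 2 ^ i.+1)).
  rewrite mulSn [X in _ < X]addnC ltn_add2l expnS mul2n -addnn -addnS.
  apply: leq_add; first by case: b; rewrite ?mul1n ?mul0n.
  exact: ltn_pmod (pow2_gt0 i).
have Hi' : i <= s by []. by rewrite -[in X in _ <= X](subnK Hi') -addnS expnD leq_mul.
Qed.
Arguments delbit_lt {i s c} _ _.

Lemma tau_cong n T l q s i d c c' : i < s -> d %| Mblk n T l q i ->
  delbit i c = delbit i c' -> tau n T l q s c = tau n T l q s c' %[mod d].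
Proof.
move=> Hi Hd E; rewrite /tau -modn_summ -[in RHS]modn_summ; congr (_ %% d).
apply: eq_bigr => i' _.
case: (eqVneq (val i') i) => [->|ne].
  by rewrite !(eqP (dvdn_mull _ Hd)).
by rewrite (@bit_other i _ c c' ne E).
Qed.

Lemma class_iff (tauf : nat -> nat) s i d : i < s ->
  (forall c c', delbit i c = delbit i c' -> tauf c = tauf c' %[mod d]) ->
  (forall c c', c < 2 ^ s -> c' < 2 ^ s -> ~~ bitn i c -> ~~ bitn i c' ->
       tauf c = tauf c' %[mod d] -> c = c') ->
  forall c c', c < 2 ^ s -> c' < 2 ^ s ->
  (tauf c == tauf c' %[mod d]) = (delbit i c == delbit i c').
Proof.
move=> Hi Hc Hu c c' Hcs Hcs'.
apply/eqP/eqP => [E|]; last exact: Hc.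
pose c0 := ins0 i (delbit i c) + false * 2 ^ i.
pose c0' := ins0 i (delbit i c') + false * 2 ^ i.
have D0 : delbit i c0 = delbit i c by rewrite delbit_ins.
have D0' : delbit i c0' = delbit i c' by rewrite delbit_ins.
have : c0 = c0'.
  apply: Hu.
  - exact: (@ins_lt i s _ false Hi (delbit_lt Hi Hcs)).
  - exact: (@ins_lt i s _ false Hi (delbit_lt Hi Hcs')).
  - by rewrite /c0 bit_ins.
  - by rewrite /c0' bit_ins.
  - by rewrite (Hc _ _ D0) E -(Hc _ _ D0').
by move=> E0; rewrite -D0 E0 D0'.
Qed.

Lemma pair_fiber s i (c : 'I_(2 ^ s)) : i < s ->
  exists c1 c2 : 'I_(2 ^ s), [/\ c1 != c2,
    delbit i c1 = delbit i c, delbit i c2 = delbit i c &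
    forall c' : 'I_(2 ^ s), (delbit i c' == delbit i c) = (c' == c1) || (c' == c2)].
Proof.
move=> Hi.
have Hm := delbit_lt Hi (ltn_ord c).
exists (Ordinal (@ins_lt i s _ false Hi Hm)), (Ordinal (@ins_lt i s _ true Hi Hm)).
split; rewrite ?delbit_ins //.
  by rewrite -val_eqE /= mul0n mul1n addn0 -[X in X == _]addn0 eqn_add2l eq_sym -lt0n pow2_gt0.
move=> c'; apply/eqP/idP => [E|].
  rewrite -!val_eqE /= (fiber i c') E.
  by case: (bitn i c'); rewrite eqxx ?orbT.
by case/orP => /eqP ->; rewrite /= ?(delbit_ins i _ false) ?(delbit_ins i _ true).
Qed.

Lemma xor_pair (I : finType) (c1 c2 : I) (F : I -> bool) : c1 != c2 ->
  \big[addb/false]_(c | (c == c1) || (c == c2)) F c = F c1 (+) F c2.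
Proof.
move=> ne.
rewrite (bigD1 c1) ?eqxx //= (bigD1 c2) /=; last by rewrite eqxx orbT eq_sym.
rewrite big_pred0 ?addbF // => c.
by case: (c == c1); case: (c == c2).
Qed.

Lemma blk_props (l : nat -> nat) s k j : 0 < s -> l 0 = 0 -> l s = k -> j < k ->
  [/\ blk l s j < s, l (blk l s j) <= j & j < l (blk l s j).+1].
Proof.
move=> Hs Hl0 Hls Hj.
have Hhas : has (fun i => j < l i.+1) (iota 0 s).
  apply/hasP; exists s.-1; first by rewrite mem_iota add0n prednK ?leqnn ?andbT.
  by rewrite prednK // Hls.
have Hlt : blk l s j < s by move: Hhas; rewrite has_find size_iota.
split => //.
- rewrite /blk; case E: (find _ _) => [|i]; first by rewrite Hl0.
  have := @before_find _ 0 (fun i => j < l i.+1) (iota 0 s) i.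
  rewrite E ltnSn nth_iota ?add0n => [H|]; last by rewrite -E ltnW // -(size_iota 0 s) -has_find.
  by rewrite leqNgt H.
- by have := nth_find 0 Hhas; rewrite nth_iota ?add0n //.
Qed.

Arguments blk_props l {s k j} _ _ _ _.
Lemma getb_lt N (g : {ffun 'I_N -> bool}) m (H : m < N) : getb g m = g (Ordinal H).
Proof. by rewrite /getb insubT. Qed.

Lemma chi_lt n k l s c alpha (j : 'I_n) (Hj : j < k) :
  chi n k l s c alpha j = getb (alpha (Ordinal Hj)) (delbit (blk l s j) c).
Proof. by rewrite /chi ffunE insubT. Qed.

Lemma chi_ge n k l s c alpha (j : 'I_n) : k <= j -> chi n k l s c alpha j = false.
Proof. by move=> H; rewrite /chi ffunE insubN // -leqNgt. Qed.

Lemma delbit_ins0 i m : delbit i (ins0 i m) = m.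
Proof. by have := delbit_ins i m false; rewrite mul0n addn0. Qed.

Lemma xor_eq a b : ~~ (a (+) b) -> a = b.
Proof. by case: a; case: b. Qed.



Local Open Scope ring_scope.

Lemma sign_xor_big (I : finType) (P : pred I) (F : I -> bool) :
  (-1) ^+ (\big[addb/false]_(i | P i) F i) = \prod_(i | P i) ((-1) ^+ F i) :> rat.
Proof. by apply: (big_morph (fun b : bool => (-1) ^+ b : rat)); [exact: signr_addb|]. Qed.

Lemma prod02 (I : finType) (b : I -> bool) :
  \prod_(i : I) (if b i then 0 else 2) = if [forall i, ~~ b i] then 2 ^+ #|I| else 0 :> rat.
Proof.
case: ifP => [/forallP H|/negbT].
  rewrite -prodr_const; apply: eq_bigr => i _; by rewrite (negbTE (H i)).
rewrite negb_forall => /existsP [i]; rewrite negbK => Hi.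
by rewrite (bigD1 i) //= Hi mul0r.
Qed.

Lemma bias_ext (I : finType) (h h' : {ffun I -> bool} -> bool) :
  (forall x, h x = h' x) -> bias h = bias h'.
Proof. by move=> H; rewrite /bias; congr (_ * _); apply: eq_bigr => x _; rewrite H. Qed.

Lemma two_exp_neq0 m : (2 ^+ m : rat) != 0.
Proof. by rewrite expf_neq0 // pnatr_eq0. Qed.

Lemma sum_sign_lin n (x y : {ffun 'I_n -> bool}) :
  \sum_(be : {ffun 'I_n -> bool}) (-1) ^+ (linf n be x (+) linf n be y)
  = if x == y then 2 ^+ n else 0 :> rat.
Proof.
have E : forall be, (-1) ^+ (linf n be x (+) linf n be y) =
   \prod_(i < n) (-1) ^+ ((be i && x i) (+) (be i && y i)) :> rat.
  move=> be; rewrite signr_addb /linf !sign_xor_big -big_split /=.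
  by apply: eq_bigr => i _; rewrite signr_addb.
rewrite (eq_bigr _ (fun be _ => E be)).
rewrite -(bigA_distr_bigA (fun i b => (-1) ^+ ((b && x i) (+) (b && y i)) : rat)).
have E2 : forall i : 'I_n, \sum_(b : bool) (-1) ^+ ((b && x i) (+) (b && y i))
   = (if x i != y i then 0 else 2) :> rat.
  by move=> i; rewrite big_bool /=; case: (x i); case: (y i).
rewrite (eq_bigr _ (fun i _ => E2 i)) prod02 card_ord.
congr (if _ then _ else _).
apply/forallP/eqP => [H|->]; last by move=> i; rewrite eqxx.
by apply/ffunP => i; move: (H i); rewrite negbK => /eqP.
Qed.

Lemma walsh n (g : {ffun 'I_n -> bool} -> bool) (y : {ffun 'I_n -> bool}) :
  (-1) ^+ (g y) = \sum_(be : {ffun 'I_n -> bool})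
     bias (fun x => g x (+) linf n be x) * (-1) ^+ (linf n be y) :> rat.
Proof.
rewrite /bias card_ord.
under eq_bigr do rewrite -mulrA mulr_suml.
rewrite -mulr_sumr exchange_big /=.
under [X in _ = _ * X]eq_bigr do
  (under eq_bigr do rewrite signr_addb -mulrA -signr_addb; rewrite -mulr_sumr sum_sign_lin).
rewrite (bigD1 y) //= eqxx big1 ?addr0; last first.
  by move=> x /negbTE ->; rewrite mulr0.
by rewrite mulrCA mulVf ?two_exp_neq0 ?mulr1.
Qed.


Definition parity {V C : finType} {n} (pos : C -> 'I_n -> V)
  (B : {ffun C -> {ffun 'I_n -> bool}}) (v : V) : bool :=
  \big[addb/false]_(p : C * 'I_n | pos p.1 p.2 == v) B p.1 p.2.

Lemma sum_X_sign (V C : finType) n (pos : C -> 'I_n -> V) (B : {ffun C -> {ffun 'I_n -> bool}}) :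
  \sum_(X : {ffun V -> bool}) \prod_(c : C) (-1) ^+ linf n (B c) [ffun j => X (pos c j)]
  = if [forall v, ~~ parity pos B v] then 2 ^+ #|V| else 0 :> rat.
Proof.
have E : forall X : {ffun V -> bool},
  \prod_(c : C) (-1) ^+ linf n (B c) [ffun j => X (pos c j)] =
  \prod_(v : V) \prod_(p : C * 'I_n | pos p.1 p.2 == v) (-1) ^+ (B p.1 p.2 && X v) :> rat.
  move=> X.
  under eq_bigr do rewrite /linf sign_xor_big.
  rewrite pair_big /=.
  rewrite (partition_big (fun p : C * 'I_n => pos p.1 p.2) xpredT) //=.
  apply: eq_bigr => v _; apply: eq_bigr => p /eqP <-; by rewrite ffunE.
rewrite (eq_bigr _ (fun X _ => E X)).
rewrite -(bigA_distr_bigA (fun v b => \prod_(p : C * 'I_n | pos p.1 p.2 == v) (-1) ^+ (B p.1 p.2 && b) : rat)).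
rewrite -prod02; apply: eq_bigr => v _.
rewrite big_bool /=.
under eq_bigr do rewrite andbT.
under [X in _ + X]eq_bigr do rewrite andbF expr0.
by rewrite big1_eq -sign_xor_big /parity; case: (\big[addb/false]_(p | _) _).
Qed.

Lemma walsh_pc (V C : finType) n (pos : C -> 'I_n -> V) (f : {ffun 'I_n -> bool} -> bool) :
  bias (fun X : {ffun V -> bool} => \big[addb/false]_(c : C) f [ffun j => X (pos c j)])
  = \sum_(B : {ffun C -> {ffun 'I_n -> bool}} | [forall v, ~~ parity pos B v])
      \prod_(c : C) bias (fun x => f x (+) linf n (B c) x).
Proof.
rewrite {1}/bias.
have E : forall X : {ffun V -> bool},
  (-1) ^+ (\big[addb/false]_(c : C) f [ffun j => X (pos c j)]) =
  \sum_(B : {ffun C -> {ffun 'I_n -> bool}})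
    (\prod_(c : C) bias (fun x => f x (+) linf n (B c) x)) *
    \prod_(c : C) (-1) ^+ linf n (B c) [ffun j => X (pos c j)] :> rat.
  move=> X; rewrite sign_xor_big.
  rewrite (eq_bigr _ (fun c _ => @walsh n f [ffun j => X (pos c j)])).
  rewrite (bigA_distr_bigA (fun c be => bias (fun x => f x (+) linf n be x) * (-1) ^+ linf n be [ffun j => X (pos c j)])).
  by apply: eq_bigr => B _; rewrite big_split.
rewrite (eq_bigr _ (fun X _ => E X)) exchange_big /= mulr_sumr.
rewrite [RHS]big_mkcond; apply: eq_bigr => B _.
rewrite -mulr_sumr sum_X_sign.
case: ifP => _; last by rewrite !mulr0.
by rewrite mulrCA mulVf ?two_exp_neq0 ?mulr1.
Qed.
Theorem theorem3 (n k s : nat) (f : {ffun 'I_n -> bool} -> bool)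
  (T : 'I_n -> nat) (l q : nat -> nat) (t : nat) :
  (0 < s)%N ->
  (forall j, 0 < T j)%N ->
  l 0%N = 0%N ->
  (forall i, i < s -> l i < l i.+1)%N ->
  l s = k -> (k <= n)%N ->
  (forall i, i < s -> 0 < q i)%N ->
  (* Assumption (G)(i) *)
  (forall j : 'I_n, (k <= j)%N -> forall c c', (c < 2 ^ s)%N -> (c' < 2 ^ s)%N ->
     tau n T l q s c = tau n T l q s c' %[mod T j] -> c = c') ->
  (* Assumption (G)(ii) *)
  (forall i, (i < s)%N -> forall j : 'I_n, (l i <= j)%N -> (j < l i.+1)%N ->
     forall c c', (c < 2 ^ s)%N -> (c' < 2 ^ s)%N -> ~~ bitn i c -> ~~ bitn i c' ->
     tau n T l q s c = tau n T l q s c' %[mod T j] -> c = c') ->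
  bias (PC n T l q s f t) =
  \sum_(alpha : {ffun 'I_k -> {ffun 'I_(2 ^ s.-1) -> bool}})
     \prod_(c < 2 ^ s) bias (fun x => f x (+) linf n (chi n k l s c alpha) x).
Proof.
move=> Hs HT Hl0 Hlt Hls Hkn Hq G1 G2.
set tf := tau n T l q s.
pose u (c : nat) := (t + tf c)%N.
pose pos := fun (c : 'I_(2 ^ s)) (j : 'I_n) =>
  Tagged (fun j => 'I_(T j)) (Ordinal (ltn_pmod (u c) (HT j))) : Vars n T.
have E1 : bias (PC n T l q s f t) = bias (fun X : {ffun Vars n T -> bool} =>
    \big[addb/false]_(c : 'I_(2 ^ s)) f [ffun j => X (pos c j)]).
  apply: bias_ext => X; rewrite /PC; apply: eq_bigr => c _; congr f.
  apply/ffunP => j; rewrite !ffunE /xval.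
  case: insubP => [o _ Ho|]; last by rewrite ltn_pmod.
  by rewrite /pos; congr (X (Tagged _ _)); apply: val_inj; rewrite /= Ho.
rewrite E1 walsh_pc.
have Hblk : forall j : 'I_n, (j < k)%N ->
    (blk l s j < s)%N /\ (T j %| Mblk n T l q (blk l s j))%N.
  move=> j Hj; have [Hi H1 H2] := blk_props l Hs Hl0 Hls Hj; split => //.
  apply: dvdn_mull.
  move/dvdn_biglcmP: (dvdnn (\big[lcmn/1%N]_(j0 < n | (l (blk l s j) <= j0)%N && (j0 < l (blk l s j).+1)%N) T j0)).
  by apply; rewrite H1 H2.
have Hclass : forall j : 'I_n, (j < k)%N -> forall c c' : 'I_(2 ^ s),
    (tf c' == tf c %[mod T j]) = (delbit (blk l s j) c' == delbit (blk l s j) c).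
  move=> j Hj c c'; have [Hi Hd] := Hblk j Hj.
  have [_ H1 H2] := blk_props l Hs Hl0 Hls Hj.
  apply: (@class_iff tf s (blk l s j) (T j) Hi _ _ c' c (ltn_ord c') (ltn_ord c)).
  - by move=> x y; apply: tau_cong.
  - by move=> x y Hx Hy Bx By; apply: (G2 _ Hi j H1 H2).
have Hsing : forall j : 'I_n, (k <= j)%N -> forall c c' : 'I_(2 ^ s),
    (tf c' == tf c %[mod T j]) = (c' == c).
  move=> j Hj c c'; apply/eqP/eqP => [E|->] //.
  by apply: val_inj; exact: (G1 j Hj _ _ (ltn_ord c') (ltn_ord c) E).
have Hpar : forall (B : {ffun 'I_(2 ^ s) -> {ffun 'I_n -> bool}}) (j0 : 'I_n) (o : 'I_(T j0)),
    parity pos B (Tagged (fun j => 'I_(T j)) o) =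
    \big[addb/false]_(c : 'I_(2 ^ s) | (u c %% T j0 == o)%N) B c j0.
  move=> B j0 o.
  rewrite /parity (eq_bigl (fun p : 'I_(2 ^ s) * 'I_n => xpredT p.1 && (pos p.1 p.2 == Tagged (fun j => 'I_(T j)) o))) //.
  rewrite -(pair_big_dep xpredT (fun c j => pos c j == Tagged (fun j => 'I_(T j)) o) (fun c j => B c j)) /=.
  rewrite [RHS]big_mkcond; apply: eq_bigr => c _.
  rewrite (eq_bigl (fun j => (j == j0) && (pos c j0 == Tagged (fun j => 'I_(T j)) o))); last first.
    move=> j; case: (eqVneq j j0) => [->|ne] //=.
    apply/eqP => H; have /= Ej := congr1 tag H; by rewrite Ej eqxx in ne.
  have -> : (pos c j0 == Tagged (fun j => 'I_(T j)) o) = (u c %% T j0 == o)%N.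
    by rewrite eq_Tagged -val_eqE.
  case: (u c %% T j0 == o)%N.
  - by rewrite (eq_bigl (fun j => j == j0)) ?big_pred1_eq // => j; rewrite andbT.
  - by rewrite big_pred0 // => j; rewrite andbF.
have Hgood : forall B : {ffun 'I_(2 ^ s) -> {ffun 'I_n -> bool}},
   [forall v, ~~ parity pos B v] = [forall j : 'I_n, forall c : 'I_(2 ^ s),
      ~~ \big[addb/false]_(c' : 'I_(2 ^ s) | tf c' == tf c %[mod T j]) B c' j].
  move=> B; apply/forallP/forallP => H.
  - move=> j; apply/forallP => c.
    have := H (Tagged (fun j => 'I_(T j)) (Ordinal (ltn_pmod (u c) (HT j)))).
    have Heq : forall c' : 'I_(2 ^ s), (u c' %% T j == u c %% T j)%N = (tf c' == tf c %[mod T j]).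
      by move=> c'; rewrite /u eqn_modDl.
    by rewrite Hpar (eq_bigl _ _ Heq).
  - move=> [j0 o]; rewrite Hpar.
    case: (pickP (fun c : 'I_(2 ^ s) => u c %% T j0 == o)%N) => [c Hc|none]; last by rewrite big_pred0.
    have Heq : forall c' : 'I_(2 ^ s), (u c' %% T j0 == o)%N = (tf c' == tf c %[mod T j0]).
      by move=> c'; rewrite -(eqP Hc) /u eqn_modDl.
    rewrite (eq_bigl _ _ Heq); exact: (forallP (H j0) c).
pose hh := fun alpha : {ffun 'I_k -> {ffun 'I_(2 ^ s.-1) -> bool}} =>
  [ffun c : 'I_(2 ^ s) => chi n k l s c alpha].
have Ehh : forall b c, hh b c = chi n k l s c b by move=> b c; rewrite /hh ffunE.
have Hinj : injective hh.
  move=> a a' E; apply/ffunP => j'; apply/ffunP => m.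
  have Hj : (widen_ord Hkn j' < k)%N by rewrite /= ltn_ord.
  have [Hi _] := Hblk _ Hj.
  pose c := Ordinal (@ins_lt (blk l s (widen_ord Hkn j')) s _ false Hi (ltn_ord m)).
  have := congr1 (fun B : {ffun 'I_(2 ^ s) -> {ffun 'I_n -> bool}} => B c (widen_ord Hkn j')) E;
  rewrite !Ehh !(@chi_lt _ _ _ _ _ _ _ Hj) /=.
  rewrite mul0n addn0 !delbit_ins0 !(@getb_lt _ _ _ (ltn_ord m)).
  have -> : Ordinal Hj = j' by apply: val_inj.
  by have -> : Ordinal (ltn_ord m) = m by apply: val_inj.
have Himg : forall B : {ffun 'I_(2 ^ s) -> {ffun 'I_n -> bool}}, [forall j : 'I_n, forall c : 'I_(2 ^ s),
      ~~ \big[addb/false]_(c' : 'I_(2 ^ s) | tf c' == tf c %[mod T j]) B c' j]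
    = (B \in [set hh a | a in [set: {ffun 'I_k -> {ffun 'I_(2 ^ s.-1) -> bool}}]]).
  move=> B; apply/forallP/imsetP.
  - move=> H.
    pose a := [ffun j' : 'I_k => [ffun m : 'I_(2 ^ s.-1) =>
       getb [ffun c => B c (widen_ord Hkn j')] (ins0 (blk l s j') m)]].
    exists a; first by rewrite in_setT.
    apply/ffunP => c; apply/ffunP => j; rewrite Ehh.
    case: (ltnP j k) => Hj.
    + rewrite (@chi_lt _ _ _ _ _ _ _ Hj).
      have [Hi _] := Hblk j Hj.
      have Hm := delbit_lt Hi (ltn_ord c).
      rewrite (@getb_lt _ _ _ Hm) ffunE ffunE /=.
      have Hc1 : (ins0 (blk l s j) (delbit (blk l s j) c) < 2 ^ s)%N.
        by have := @ins_lt (blk l s j) s _ false Hi Hm; rewrite mul0n addn0.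
      rewrite (@getb_lt _ _ _ Hc1) ffunE.
      have -> : widen_ord Hkn (Ordinal Hj) = j by apply: val_inj.
      have [d1 [d2 [ne D1 D2 Hf]]] := @pair_fiber s (blk l s j) c Hi.
      have Hx := forallP (H j) c.
      rewrite (eq_bigl _ _ (fun c' => etrans (Hclass j Hj c c') (Hf c'))) xor_pair // in Hx.
      move/xor_eq: Hx => Hd.
      have Hin : forall x : 'I_(2 ^ s), delbit (blk l s j) x = delbit (blk l s j) c -> B x j = B d1 j.
        move=> x Dx; have := Hf x; rewrite Dx eqxx => /esym /orP [] /eqP -> //.
      by rewrite (Hin c) // (Hin (Ordinal Hc1)) //= delbit_ins0.
    + rewrite chi_ge //.
      have Hx := forallP (H j) c.
      by rewrite (eq_bigl _ _ (Hsing j Hj c)) big_pred1_eq in Hx; apply: negbTE.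
  - move=> [a _ ->] j; apply/forallP => c.
    case: (ltnP j k) => Hj.
    + have [Hi _] := Hblk j Hj.
      have [d1 [d2 [ne D1 D2 Hf]]] := @pair_fiber s (blk l s j) c Hi.
      rewrite (eq_bigl _ _ (fun c' => etrans (Hclass j Hj c c') (Hf c'))) xor_pair //.
      by rewrite !Ehh !(@chi_lt _ _ _ _ _ _ _ Hj) D1 D2 addbb.
    + by rewrite big1 // => c' _; rewrite Ehh chi_ge.
transitivity (\sum_(B in [set hh a | a in [set: {ffun 'I_k -> {ffun 'I_(2 ^ s.-1) -> bool}}]])
    \prod_c bias (fun x : {ffun 'I_n -> bool} => f x (+) linf n (B c) x)).
  by apply: eq_bigl => B; rewrite Hgood Himg.
rewrite big_imset; last by move=> a a' _ _; apply: Hinj.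
apply: eq_big => [a|a _]; first by rewrite in_setT.
by apply: eq_bigr => c _; rewrite /hh ffunE.
Qed.
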